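(* Let $x,y$ be non-commuting indeterminates and $C=xyx^{-1}y^{-1}$. Let $(R_n)_{n\in\mathbb Z}$ satisfy $$R_{2n}CR_{2n-2}=1+R_{2n-1},\qquad R_{2n+1}CR_{2n-1}=1+R_{2n}^4\qquad(n\in\mathbb Z),$$ with $R_0=yxy^{-1}$ and $R_1=y$. Set $u_n=R_{2n}$. Then $$K_n:=\big((Cu_n)^2+u_{n+1}^2\big)\big(u_{n+1}Cu_n-1\big)^{-1}$$ is independent of $n$.
   Context: Work in the free skew field (non-commutative rational functions) over $\mathbb C$ generated by $x,y$. The two displayed relations are the $(1,4)$-system. They determine $R_n$ for all $n\in\mathbb Z$ from $R_0,R_1$. Note that $u_{n+1}Cu_n-1=R_{2n+1}$. *)

(* Defs.v *)
From HB Require Import structures.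
From mathcomp Require Import all_boot all_order all_algebra.
Set Implicit Arguments. Unset Strict Implicit. Unset Printing Implicit Defensive.
Import Order.TTheory GRing.Theory Num.Theory.
Local Open Scope ring_scope.

Definition division_ring (D : unitRingType) : Prop :=
  forall a : D, a != 0 -> a \is a GRing.unit.

Definition commC (D : unitRingType) (x y : D) : D := x * y * x^-1 * y^-1.

Definition sys14 (D : unitRingType) (x y : D) (R : int -> D) : Prop :=
  forall n : int,
    R (2 * n) * commC x y * R (2 * n - 2) = 1 + R (2 * n - 1) /\
    R (2 * n + 1) * commC x y * R (2 * n - 1) = 1 + R (2 * n) ^+ 4.

Definition useq (D : unitRingType) (R : int -> D) (n : int) : D := R (2 * n).

Definition Kseq (D : unitRingType) (x y : D) (R : int -> D) (n : int) : D :=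
  ((commC x y * useq R n) ^+ 2 + useq R (n + 1) ^+ 2)
  * (useq R (n + 1) * commC x y * useq R n - 1)^-1.

(* Main.v *)
Require Import Defs.
From HB Require Import structures.
From mathcomp Require Import all_boot all_order all_algebra.
Import Order.TTheory GRing.Theory Num.Theory.
Local Open Scope ring_scope.

Lemma final (D : nzRingType) (a2 p q d dl : D) :
  d * dl = 1 -> dl * d = 1 -> p * q = q * p -> q * p = a2 ->
  a2 + (p + (p + q) * dl) * (p + (p + q) * dl) =
  (p + q) * dl * ((1 + d) * (p * (1 + d)) + q) * dl.
Proof.
move=> ddl dld pq qp.
rewrite !(mulrDl, mulrDr) !mulr1 !mul1r !mulrA.
rewrite -!(mulrA _ d dl) ddl !mulr1.
rewrite -!(mulrA _ dl d) dld !mulr1.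
rewrite pq qp !addrA.
by rewrite [LHS](ACl (6*5*3*2*7*9*8*4*1*10)).
Qed.

Lemma core (D : unitRingType) (a b c d e C : D) :
  a \is a GRing.unit -> b \is a GRing.unit -> d \is a GRing.unit ->
  C \is a GRing.unit ->
  b * C * a = a * b -> c * C * a = 1 + b -> b * C * d = 1 + a ^+ 4 ->
  a * C * e = 1 + d -> a * C * d = d * a ->
  ((C * a) ^+ 2 + c ^+ 2) * (c * C * a - 1)^-1 =
  ((C * e) ^+ 2 + a ^+ 2) * (a * C * e - 1)^-1.
Proof.
move=> ua ub ud uC F1 F2 F3 F4 F5.
have -> : c * C * a - 1 = b by rewrite F2 addrAC subrr add0r.
have -> : a * C * e - 1 = d by rewrite F4 addrAC subrr add0r.
apply: (mulrI ub).
have Ca : C * a = b^-1 * (a * b) by rewrite -F1 -!mulrA mulKr.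
have Ce : C * e = a^-1 * (1 + d) by rewrite -F4 -!mulrA mulKr.
have Cd : C * d = a^-1 * (d * a) by rewrite -F5 -!mulrA mulKr.
have hc : c = (1 + b) * b^-1 * a^-1 * b.
  have uCa : C * a \is a GRing.unit by rewrite unitrMl.
  rewrite -[c](mulrK uCa) mulrA F2 Ca.
  by rewrite invrM ?unitrV ?unitrMl // invrM // invrK !mulrA.
have bc : b * (1 + b) = (1 + b) * b by rewrite mulrDr mulrDl mulr1 mul1r.
have hb1 : forall X, X * b * (1 + b) * b^-1 = X * (1 + b).
  move=> X.
  by rewrite -(mulrA X) bc mulrA mulrK.
have hG : b * a^-1 = (a^-1 + a ^+ 3) * d^-1.
  apply: (mulIr ud); apply: (mulIr ua).
  rewrite divrK // mulrDl mulVr // -exprSr -!mulrA -Cd mulrA F3.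
  done.
rewrite mulrA mulrDr mulrDl.
have h1 : b * (C * a) ^+ 2 * b^-1 = a ^+ 2.
  by rewrite Ca expr2 !mulrA mulrV // mul1r !mulrK.
have h2 : b * c ^+ 2 * b^-1 = ((1 + b) * a^-1) * ((1 + b) * a^-1).
  have hb0 : b * (1 + b) / b = 1 + b by rewrite bc mulrK.
  by rewrite hc expr2 !mulrA mulrK // hb0 hb1.
have hba : (1 + b) / a = a^-1 + (a^-1 + a ^+ 3) / d by rewrite mulrDl mul1r hG.
have hR : a * ((C * e) ^+ 2 + a ^+ 2) = (1 + d) * (a^-1 * (1 + d)) + a ^+ 3.
  by rewrite mulrDr -exprS expr2 mulrA [a * (C * e)]mulrA F4 Ce.
rewrite h1 h2 hba -{1}(divrK ua b) [RHS]mulrA -(mulrA (b / a) a) hR hG.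
have fin := @final _ (a ^+ 2) (a^-1) (a ^+ 3) d d^-1 (divrr ud) (mulVr ud).
rewrite !mulrA in fin *. apply: fin.
  rewrite mulVr // mul1r (exprSr a 2) mulrK //; reflexivity.
rewrite (exprSr a 2) mulrK //.
Qed.

Lemma step (D : unitRingType) (A B Z C s : D) :
  A \is a GRing.unit -> B \is a GRing.unit -> C \is a GRing.unit ->
  Z \is a GRing.unit ->
  Z * C * A = 1 + s -> (1 + s) * B = B * (1 + s) ->
  (B * C * A = A * B <-> Z * C * B = B * Z).
Proof.
move=> uA uB uC uZ F cm.
have uS : 1 + s \is a GRing.unit by rewrite -F unitrMl // unitrMl.
have hZ : Z = (1 + s) / A / C by rewrite -F !mulrK.
split => H.
- have HB : B = A * B / A / C by rewrite -H !mulrK.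
  rewrite hZ divrK // !mulrA -cm [X in _ / A * X]HB !mulrA divrK //.
- rewrite hZ divrK // !mulrA -cm in H.
  have H' : A^-1 * B = B / A / C by apply: (mulrI uS); rewrite !mulrA.
  have HB : B = A * B / A / C by rewrite -{1}(mulVKr uA B) H' !mulrA.
  by rewrite {1}HB !divrK.
Qed.
Lemma Rix {D : unitRingType} (R : int -> D) {i j : int} : i = j -> R i = R j.
Proof. by move->. Qed.

From mathcomp Require Import zify.

Lemma int_ind2 (Q : int -> Prop) : Q 0 -> (forall n, Q n <-> Q (n + 1)) -> forall n, Q n.
Proof.
move=> Q0 HQ; case=> m.
- elim: m => [//|m IH].
  have -> : Posz m.+1 = Posz m + 1 by lia.
  by apply (HQ m).1.
- elim: m => [|m IH].
  + apply (HQ _).2; have -> : Negz 0 + 1 = 0 by rewrite NegzE; lia.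
    done.
  + apply (HQ _).2; have -> : Negz m.+1 + 1 = Negz m by rewrite !NegzE; lia.
    done.
Qed.

Theorem lemma4p1 (D : unitRingType) (hD : division_ring D) (x y : D)
    (hx : x \is a GRing.unit) (hy : y \is a GRing.unit)
    (R : int -> D) (hsys : sys14 x y R)
    (hR0 : R 0 = y * x * y^-1) (hR1 : R 1 = y)
    (hRunit : forall n : int, R n \is a GRing.unit) :
  forall n : int, Kseq x y R n = Kseq x y R 0.
Proof.
set C := commC x y.
have uC : C \is a GRing.unit.
  by rewrite /C /commC !unitrMl ?unitrV.
pose P (k : int) := R (k + 1) * C * R k = R k * R (k + 1).
have P0 : P 0.
  rewrite /P add0r hR0 hR1 /C /commC !mulrA !divrK // !mulrK //.
have stepE : forall n, P (2 * n - 1) <-> P (2 * n).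
  move=> n; rewrite /P (Rix R (_ : 2 * n - 1 + 1 = 2 * n)); last by lia.
  apply: (@step _ _ _ _ _ (R (2 * n) ^+ 4)); rewrite ?hRunit //; first exact: (hsys n).2.
  by rewrite mulrDl mulrDr mul1r mulr1 -exprSr -exprS.
have stepO : forall n, P (2 * n) <-> P (2 * n + 1).
  move=> n; rewrite /P (Rix R (_ : 2 * n + 1 + 1 = 2 * (n + 1))); last by lia.
  apply: (@step _ _ _ _ _ (R (2 * n + 1))); rewrite ?hRunit //.
    have := (hsys (n + 1)).1.
    rewrite (Rix R (_ : 2 * (n + 1) - 2 = 2 * n)); last by lia.
    rewrite (Rix R (_ : 2 * (n + 1) - 1 = 2 * n + 1)); last by lia.
    by [].
  by rewrite mulrDl mulrDr mul1r mulr1.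
have Qall : forall n, P (2 * n) /\ P (2 * n + 1).
  apply: int_ind2; first by split; [exact: P0 | apply/stepO; exact: P0].
  move=> n; have h1 := stepO n; have h2 := stepO (n + 1); have h3 := stepE (n + 1).
  rewrite (_ : 2 * (n + 1) - 1 = 2 * n + 1) in h3; last by lia.
  tauto.
apply: int_ind2 => // n.
suff -> : Kseq x y R (n + 1) = Kseq x y R n by [].
rewrite /Kseq /useq.
apply: core; rewrite ?hRunit //.
- exact: (Qall (n + 1)).1.
- have := (hsys (n + 1 + 1)).1.
  rewrite (Rix R (_ : 2 * (n + 1 + 1) - 2 = 2 * (n + 1))); last by lia.
  rewrite (Rix R (_ : 2 * (n + 1 + 1) - 1 = 2 * (n + 1) + 1)); last by lia.
  by [].
- exact: (hsys (n + 1)).2.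
- have := (hsys (n + 1)).1.
  rewrite (Rix R (_ : 2 * (n + 1) - 2 = 2 * n)); last by lia.
  by [].
- have := (Qall n).2; rewrite /P.
  rewrite (Rix R (_ : 2 * n + 1 + 1 = 2 * (n + 1))); last by lia.
  rewrite (Rix R (_ : 2 * n + 1 = 2 * (n + 1) - 1)); last by lia.
  by [].
Qed.
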